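(* Let $(\Lambda,d)$ be a $k$-graph. Let $\lambda\in\Lambda$ and $(x;(m,n))\in P_\Lambda$ with $m\le d(x)$ and $s(\lambda)=x(m)$, and let $z=\lambda\,\sigma^m x$. Then (i) $z\in\Lambda^{\le\infty}$, and (ii) $(z;(d(\lambda),n-m+d(\lambda)))\sim(x;(m,n))$.
   Context: A $k$-graph $(\Lambda,d)$ is a countable category with a degree functor $d:\Lambda\to\mathbb{N}^k$ satisfying unique factorization (if $d(\lambda)=m+n$ there are unique $\mu,\nu$ with $\lambda=\mu\nu$, $d(\mu)=m$, $d(\nu)=n$); $\Lambda^0$ vertices, $r,s$ range/source, $v\Lambda^n=\{\lambda:r(\lambda)=v,d(\lambda)=n\}$; $e_i$ standard basis, $\le$ coordinatewise, $\vee,\wedge$ coordinatewise max/min. For $m\in(\mathbb{N}\cup\{\infty\})^k$, $\Omega_{k,m}$ is the $k$-graph with objects $\{p\in\mathbb{N}^k:p\le m\}$, morphisms $(p,q)$, $p\le q\le m$, $r(p,q)=p$, $s(p,q)=q$, $d(p,q)=q-p$. A graph morphism $x:\Omega_{k,m}\to\Lambda$ is a degree-preserving functor; $d(x)=m$, $x(a,b)=x((a,b))$, $x(a)=x(a,a)$. It is a boundary path if there is $n_x\in\mathbb{N}^k$, $n_x\le d(x)$, with $x(p)\Lambda^{e_i}=\emptyset$ whenever $p\in\mathbb{N}^k$, $n_x\le p\le d(x)$, $p_i=d(x)_i$; $\Lambda^{\le\infty}$ is the set of boundary paths. $\sigma^px(a,b)=x(a+p,b+p)$ on $\Omega_{k,d(x)-p}$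 for $p\le d(x)$. For $\lambda$ with $s(\lambda)=x(0)$, $\lambda x:\Omega_{k,d(\lambda)+d(x)}\to\Lambda$ is the graph morphism with $(\lambda x)(0,d(\lambda))=\lambda$, $(\lambda x)(0,p)=\lambda\,x(0,p-d(\lambda))$ for $d(\lambda)\le p\le d(\lambda)+d(x)$. $P_\Lambda=\{(x;(m,n)):x\in\Lambda^{\le\infty},m,n\in\mathbb{N}^k,m\le n,n\not\le d(x)\}$, and $(x;(m,n))\sim(y;(p,q))$ iff $x(m\wedge d(x),n\wedge d(x))=y(p\wedge d(y),q\wedge d(y))$, $m-m\wedge d(x)=p-p\wedge d(y)$ and $n-m=q-p$. *)

(* Defs.v *)
From Stdlib Require Import ClassicalEpsilon.
From mathcomp Require Import all_boot.

Set Implicit Arguments.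
Unset Strict Implicit.
Unset Printing Implicit Defensive.

Definition nvec (k : nat) := 'I_k -> nat.

Section Vec.
Variable k : nat.
Definition v0 : nvec k := fun _ => 0.
Definition vadd (a b : nvec k) : nvec k := fun i => a i + b i.
Definition vsub (a b : nvec k) : nvec k := fun i => a i - b i. (* truncated *)
Definition vle (a b : nvec k) : Prop := forall i, a i <= b i.
Definition vjoin (a b : nvec k) : nvec k := fun i => maxn (a i) (b i).
Definition vmeet (a b : nvec k) : nvec k := fun i => minn (a i) (b i).
Definition ve (j : 'I_k) : nvec k := fun i => (i == j : nat).
End Vec.

Inductive enat := Fin of nat | Inf.
Definition evec (k : nat) := 'I_k -> enat.

Section EVec.
Variable k : nat.
Definition vle_e (p : nvec k) (m : evec k) : Prop :=
  forall i, match m i with Fin n => p i <= n | Inf => true end.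
Definition vmeet_e (p : nvec k) (m : evec k) : nvec k :=
  fun i => match m i with Fin n => minn (p i) n | Inf => p i end.
Definition vadd_e (p : nvec k) (m : evec k) : evec k :=
  fun i => match m i with Fin n => Fin (p i + n) | Inf => Inf end.
Definition vsub_e (m : evec k) (p : nvec k) : evec k :=
  fun i => match m i with Fin n => Fin (n - p i) | Inf => Inf end.
End EVec.

(** * k-graphs: countable category with degree functor and unique factorization.
    Composition is a total function, only constrained on composable pairs
    (s μ = r ν); [comp μ ν] is the composite μν. *)
Record kgraph (k : nat) := KGraph {
  Obj : Type;
  Mor : Type;
  src : Mor -> Obj;
  rng : Mor -> Obj;
  idm : Obj -> Mor;
  comp : Mor -> Mor -> Mor;
  deg : Mor -> nvec k;
  obj_countable : exists f : Obj -> nat, injective f;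
  mor_countable : exists f : Mor -> nat, injective f;
  rng_idm : forall v, rng (idm v) = v;
  src_idm : forall v, src (idm v) = v;
  rng_comp : forall a b, src a = rng b -> rng (comp a b) = rng a;
  src_comp : forall a b, src a = rng b -> src (comp a b) = src b;
  comp_idl : forall a, comp (idm (rng a)) a = a;
  comp_idr : forall a, comp a (idm (src a)) = a;
  compA : forall a b c, src a = rng b -> src b = rng c ->
    comp (comp a b) c = comp a (comp b c);
  deg_idm : forall v, deg (idm v) = @v0 k;
  deg_comp : forall a b, src a = rng b -> deg (comp a b) = vadd (deg a) (deg b);
  factorization : forall l m n, deg l = vadd m n ->
    exists a b, [/\ src a = rng b, l = comp a b, deg a = m & deg b = n];
  factorization_uniq : forall a b a' b',
    src a = rng b -> src a' = rng b' -> comp a b = comp a' b' ->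
    deg a = deg a' -> deg b = deg b' -> a = a' /\ b = b'
}.

Arguments src {k L} _ : rename.
Arguments rng {k L} _ : rename.
Arguments idm {k L} _ : rename.
Arguments comp {k L} _ _ : rename.
Arguments deg {k L} _ : rename.

Section Paths.
Variables (k : nat) (L : kgraph k).

(** λ(a,b): the factor of λ of degree b - a starting at degree a
    (well defined by unique factorization when a <= b <= d(λ)). *)
Definition seg (l : Mor L) (a b : nvec k) : Mor L :=
  epsilon (inhabits l) (fun nu => exists mu rho,
    [/\ src mu = rng nu, src nu = rng rho, l = comp (comp mu nu) rho,
        deg mu = a & deg nu = vsub b a]).

(** A candidate graph morphism x : Ω_{k,m} -> Λ: its degree m and its
    values x(a,b) on morphisms (a,b) of Ω_{k,m} (values outside the
    domain are irrelevant). The object map is p ↦ r(x(p,p)). *)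
Record kpath := KPath { pdeg : evec k; pmor : nvec k -> nvec k -> Mor L }.

Definition vertex (x : kpath) (p : nvec k) : Obj L := rng (pmor x p p).

Definition is_graph_morphism (x : kpath) : Prop :=
  forall p q t, vle p q -> vle q t -> vle_e t (pdeg x) ->
    [/\ deg (pmor x p q) = vsub q p,
        rng (pmor x p q) = vertex x p,
        src (pmor x p q) = vertex x q,
        pmor x p p = idm (vertex x p)
      & comp (pmor x p q) (pmor x q t) = pmor x p t].

Definition is_boundary_path (x : kpath) : Prop :=
  is_graph_morphism x /\
  exists nx : nvec k, vle_e nx (pdeg x) /\
    forall (p : nvec k) (i : 'I_k), vle nx p -> vle_e p (pdeg x) ->
      pdeg x i = Fin (p i) ->
      forall mu : Mor L, rng mu = vertex x p -> deg mu <> ve i.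

Definition shift (p : nvec k) (x : kpath) : kpath :=
  KPath (vsub_e (pdeg x) p) (fun a b => pmor x (vadd a p) (vadd b p)).

(** concatenation λx, determined by (λx)(0,q) = λ x(0, q - d(λ)) for
    d(λ) <= q: for a general morphism (a,b), (λx)(a,b) is the segment
    (a,b) of (λx)(0, b ∨ d(λ)). *)
Definition concat (l : Mor L) (x : kpath) : kpath :=
  KPath (vadd_e (deg l) (pdeg x))
    (fun a b => seg (comp l (pmor x (@v0 k) (vsub (vjoin b (deg l)) (deg l)))) a b).

Definition in_P (x : kpath) (m n : nvec k) : Prop :=
  [/\ is_boundary_path x, vle m n & ~ vle_e n (pdeg x)].

Definition P_equiv (x : kpath) (m n : nvec k) (y : kpath) (p q : nvec k) : Prop :=
  [/\ in_P x m n, in_P y p q,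
      pmor x (vmeet_e m (pdeg x)) (vmeet_e n (pdeg x))
        = pmor y (vmeet_e p (pdeg y)) (vmeet_e q (pdeg y)),
      vsub m (vmeet_e m (pdeg x)) = vsub p (vmeet_e p (pdeg y))
    & vsub n m = vsub q p].

End Paths.

(* Main.v *)
Require Import Defs.
From mathcomp Require Import all_boot.
From Stdlib Require Import ClassicalEpsilon FunctionalExtensionality.
From mathcomp Require Import zify.
Set Implicit Arguments.
Unset Strict Implicit.
Unset Printing Implicit Defensive.

Local Notation kc := Defs.comp.
Local Notation kcA := Defs.compA.

Lemma vext k (a b : nvec k) : (forall i, a i = b i) -> a = b.
Proof. exact: functional_extensionality. Qed.

Lemma vle_refl k (p : nvec k) : vle p p.
Proof. by move=> i. Qed.

Lemma vle_trans k (p q t : nvec k) : vle p q -> vle q t -> vle p t.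
Proof. by move=> H1 H2 i; apply: leq_trans (H1 i) (H2 i). Qed.

Lemma vle_e_trans k (q t : nvec k) e : vle q t -> vle_e t e -> vle_e q e.
Proof. by move=> H1 H2 i; move: (H2 i); case: (e i) => // N; apply: leq_trans (H1 i). Qed.

Lemma comp_idr' k (L : kgraph k) (a b : Mor L) : src a = rng b ->
  kc (kc a b) (idm (src b)) = kc a b.
Proof. by move=> H; rewrite -(src_comp H) comp_idr. Qed.

Lemma factor2 k (L : kgraph k) (l : Mor L) (a : nvec k) : vle a (deg l) ->
  exists mu rho, [/\ src mu = rng rho, l = kc mu rho, deg mu = a & deg rho = vsub (deg l) a].
Proof.
move=> Ha.
have E : deg l = vadd a (vsub (deg l) a).
  by apply: vext => i; rewrite /vadd /vsub; have := Ha i; lia.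
have [mu [rho [H1 H2 H3 H4]]] := factorization E.
by exists mu, rho.
Qed.

Lemma factor3 k (L : kgraph k) (l : Mor L) (a b : nvec k) : vle a b -> vle b (deg l) ->
  exists mu nu rho, [/\ src mu = rng nu, src nu = rng rho, l = kc (kc mu nu) rho,
     deg mu = a & deg nu = vsub b a] /\ deg rho = vsub (deg l) b.
Proof.
move=> Hab Hb.
have [M [rho [H1 H2 H3 H4]]] := factor2 Hb.
have HaM : vle a (deg M) by rewrite H3.
have [mu [nu [G1 G2 G3 G4]]] := factor2 HaM.
exists mu, nu, rho; split=> //; split=> //.
- by rewrite -H1 G2 (src_comp G1).
- by rewrite H2 G2.
- by rewrite G4 H3.
Qed.

Lemma seg_char k (L : kgraph k) (l mu nu rho : Mor L) (a b : nvec k) :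
  src mu = rng nu -> src nu = rng rho -> l = kc (kc mu nu) rho ->
  deg mu = a -> deg nu = vsub b a -> seg l a b = nu.
Proof.
move=> H1 H2 H3 H4 H5; rewrite /seg.
match goal with |- epsilon ?i ?P = _ =>
  have := epsilon_spec i P (ex_intro _ nu (ex_intro _ mu (ex_intro _ rho (And5 H1 H2 H3 H4 H5))));
  set e := epsilon i P end.
move=> [mu' [rho' [G1 G2 G3 G4 G5]]].
have Hs : src (kc mu nu) = rng rho by rewrite (src_comp H1).
have Hs' : src (kc mu' e) = rng rho' by rewrite (src_comp G1).
have Hd : deg (kc mu nu) = deg (kc mu' e) by rewrite (deg_comp H1) (deg_comp G1) H4 H5 G4 G5.
have Hr : deg rho = deg rho'.
  apply: vext => i.
  have E1 := congr1 (fun f => f i) (congr1 deg H3).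
  have E2 := congr1 (fun f => f i) (congr1 deg G3).
  move: E1 E2; rewrite /= (deg_comp Hs) (deg_comp Hs') Hd /vadd; lia.
have Hc : kc (kc mu nu) rho = kc (kc mu' e) rho' by rewrite -H3 -G3.
have [E1 _] := factorization_uniq Hs Hs' Hc Hd Hr.
have Hm : deg mu = deg mu' by rewrite H4 G4.
have Hn : deg nu = deg e by rewrite H5 G5.
have [_ E2] := factorization_uniq H1 G1 E1 Hm Hn.
by rewrite E2.
Qed.

Lemma seg_props k (L : kgraph k) (l : Mor L) (p q t : nvec k) :
  vle p q -> vle q t -> vle t (deg l) ->
  [/\ deg (seg l p q) = vsub q p, rng (seg l p q) = rng (seg l p p),
      src (seg l p q) = rng (seg l q q), seg l p p = idm (rng (seg l p p))
    & kc (seg l p q) (seg l q t) = seg l p t].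
Proof.
move=> Hpq Hqt Htl.
have Hql : vle q (deg l) by move=> i; apply: leq_trans (Hqt i) (Htl i).
have [mu1 [nu1 [rho1 [[H1 H2 H3 H4 H5] H6]]]] := factor3 Hpq Hql.
have Spq : seg l p q = nu1 := seg_char H1 H2 H3 H4 H5.
have Spp : seg l p p = idm (src mu1).
  apply: (@seg_char _ _ l mu1 (idm (src mu1)) (kc nu1 rho1)).
  - by rewrite rng_idm.
  - by rewrite src_idm (rng_comp H2).
  - by rewrite comp_idr H3 (kcA H1 H2).
  - done.
  - by rewrite deg_idm; apply: vext => i; rewrite /vsub /v0 subnn.
have Sqq : seg l q q = idm (src nu1).
  apply: (@seg_char _ _ l (kc mu1 nu1) (idm (src nu1)) rho1).
  - by rewrite rng_idm (src_comp H1).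
  - by rewrite src_idm.
  - by rewrite (comp_idr' H1).
  - by rewrite (deg_comp H1) H4 H5; apply: vext => i; rewrite /vadd /vsub; have := Hpq i; lia.
  - by rewrite deg_idm; apply: vext => i; rewrite /vsub /v0 subnn.
have Hr : vle (vsub t q) (deg rho1).
  by rewrite H6 => i; rewrite /vsub; have := Htl i; have := Hqt i; lia.
have [nu2 [rho2 [G1 G2 G3 G4]]] := factor2 Hr.
have Hs1 : src (kc mu1 nu1) = rng nu2 by rewrite (src_comp H1) H2 G2 (rng_comp G1).
have Hl2 : l = kc (kc (kc mu1 nu1) nu2) rho2 by rewrite H3 G2 (kcA Hs1 G1).
have Sqt : seg l q t = nu2.
  apply: (seg_char Hs1 G1 Hl2) => //.
  by rewrite (deg_comp H1) H4 H5; apply: vext => i; rewrite /vadd /vsub; have := Hpq i; lia.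
have Hn12 : src nu1 = rng nu2 by rewrite H2 G2 (rng_comp G1).
have Spt : seg l p t = kc nu1 nu2.
  apply: (@seg_char _ _ l mu1 (kc nu1 nu2) rho2).
  - by rewrite (rng_comp Hn12).
  - by rewrite (src_comp Hn12).
  - by rewrite Hl2 (kcA H1 Hn12).
  - done.
  - rewrite (deg_comp Hn12) H5 G3; apply: vext => i; rewrite /vadd /vsub.
    by have := Hpq i; have := Hqt i; lia.
rewrite Spq Spp Sqq Sqt Spt rng_idm; split => //.
by rewrite rng_idm.
Qed.

Lemma seg_ext k (L : kgraph k) (l e : Mor L) (a b : nvec k) :
  src l = rng e -> vle a b -> vle b (deg l) -> seg (kc l e) a b = seg l a b.
Proof.
move=> He Hab Hb.
have [mu [nu [rho [[H1 H2 H3 H4 H5] _]]]] := factor3 Hab Hb.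
rewrite (seg_char H1 H2 H3 H4 H5).
have Hs : src (kc mu nu) = rng rho by rewrite (src_comp H1).
have Hre : src rho = rng e by rewrite -He H3 (src_comp Hs).
apply: (@seg_char _ _ _ mu nu (kc rho e)) => //.
- by rewrite (rng_comp Hre).
- by rewrite H3 (kcA Hs Hre).
Qed.

Theorem proposition3p16 (k : nat) (L : kgraph k) (lam : Mor L)
    (x : kpath L) (m n : nvec k) :
  in_P x m n -> vle_e m (pdeg x) -> src lam = vertex x m ->
  is_boundary_path (concat lam (shift m x)) /\
  P_equiv (concat lam (shift m x)) (deg lam) (vadd (vsub n m) (deg lam)) x m n.
Proof.
move=> [[Hgx [nx [Hnxle Hbd]]] Hmn Hnx] Hm Hsrc.
set z := concat lam (shift m x).
pose r (q : nvec k) : nvec k := vadd (vsub (vjoin q (deg lam)) (deg lam)) m.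
pose W (q : nvec k) := kc lam (pmor x m (r q)).
have Ez : forall a b, pmor z a b = seg (W b) a b by move=> a b; reflexivity.
have K : forall q, vle_e q (pdeg z) -> vle_e (r q) (pdeg x).
  move=> q Hq i; move: (Hq i) (Hm i); rewrite /z /r /vadd /vsub /vjoin /= /vadd_e /vsub_e.
  case: (pdeg x i) => [N|] //= ; lia.
have Hmr : forall q, vle m (r q) by move=> q i; rewrite /r /vadd; lia.
have Hrr : forall q t, vle q t -> vle (r q) (r t).
  by move=> q t H i; rewrite /r /vadd /vsub /vjoin; have := H i; lia.
have degW : forall q, vle_e q (pdeg z) -> deg (W q) = vjoin q (deg lam).
  move=> q Hq; have [D R S _ _] := Hgx m (r q) (r q) (Hmr q) (vle_refl _) (K q Hq).
  have Hc : src lam = rng (pmor x m (r q)) by rewrite R.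
  rewrite /W (deg_comp Hc) D; apply: vext => i; rewrite /r /vadd /vsub /vjoin.
  lia.
have SW : forall q, vle_e q (pdeg z) -> src (W q) = vertex x (r q).
  move=> q Hq; have [D R S _ _] := Hgx m (r q) (r q) (Hmr q) (vle_refl _) (K q Hq).
  have Hc : src lam = rng (pmor x m (r q)) by rewrite R.
  by rewrite /W (src_comp Hc) S.
have WW : forall q t, vle q t -> vle_e t (pdeg z) -> W t = kc (W q) (pmor x (r q) (r t)).
  move=> q t Hqt Ht.
  have [_ R1 S1 _ C1] := Hgx m (r q) (r t) (Hmr q) (Hrr q t Hqt) (K t Ht).
  have [_ R2 _ _ _] := Hgx (r q) (r t) (r t) (Hrr q t Hqt) (vle_refl _) (K t Ht).
  have c1 : src lam = rng (pmor x m (r q)) by rewrite R1.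
  have c2 : src (pmor x m (r q)) = rng (pmor x (r q) (r t)) by rewrite S1 R2.
  by rewrite /W -C1 (kcA c1 c2).
have ZW : forall p q t, vle p q -> vle q t -> vle_e t (pdeg z) -> pmor z p q = seg (W t) p q.
  move=> p q t Hpq Hqt Ht.
  have Hq : vle_e q (pdeg z) := vle_e_trans Hqt Ht.
  have [_ R2 _ _ _] := Hgx (r q) (r t) (r t) (Hrr q t Hqt) (vle_refl _) (K t Ht).
  rewrite Ez (WW q t Hqt Ht) seg_ext //.
  - by rewrite SW // R2.
  - by rewrite degW // => i; rewrite /vjoin; apply: leq_maxl.
have Hz : is_boundary_path z.
  split.
  - move=> p q t Hpq Hqt Ht.
    have Htl : vle t (deg (W t)) by rewrite degW // => i; apply: leq_maxl.
    have [A B C D E] := seg_props Hpq Hqt Htl.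
    rewrite /vertex (ZW p q t Hpq Hqt Ht) (ZW p p t (vle_refl p) (vle_trans Hpq Hqt) Ht).
    rewrite (ZW q q t (vle_refl q) Hqt Ht) (ZW q t t Hqt (vle_refl t) Ht).
    rewrite (ZW p t t (vle_trans Hpq Hqt) (vle_refl t) Ht).
    by split.
  - pose nz : nvec k := fun i => deg lam i + (maxn (nx i) (m i) - m i).
    exists nz; split.
    + move=> i; move: (Hnxle i) (Hm i); rewrite /nz /z /= /vadd_e /vsub_e.
      case: (pdeg x i) => [N|] //= ; lia.
    + move=> p i Hp Hpz Hpi mu Hmu Hdeg.
      have Hdp : vle (deg lam) p by move=> j; have := Hp j; rewrite /nz; lia.
      have Eq : pmor z p p = idm (src (W p)).
        rewrite (ZW p p p (vle_refl p) (vle_refl p) Hpz).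
        apply: (@seg_char _ _ (W p) (W p) (idm (src (W p))) (idm (src (W p)))).
        - by rewrite rng_idm.
        - by rewrite src_idm rng_idm.
        - by rewrite !comp_idr.
        - by rewrite degW //; apply: vext => j; rewrite /vjoin; have := Hdp j; lia.
        - by rewrite deg_idm; apply: vext => j; rewrite /vsub /v0 subnn.
      have Hv : vertex z p = vertex x (r p) by rewrite /vertex Eq rng_idm SW.
      apply: (Hbd (r p) i _ (K p Hpz) _ mu _ Hdeg).
      * by move=> j; have := Hp j; rewrite /r /nz /vadd /vsub /vjoin; lia.
      * move: Hpi (Hm i); rewrite /z /= /vadd_e /vsub_e /r /vadd /vsub /vjoin.
        case: (pdeg x i) => [N|] /=; last by [].
        by move=> [E] HmN; congr Fin; lia.
      * by rewrite -Hv.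
split => //.
pose n' : nvec k := vmeet_e n (pdeg x).
have Hn'x : vle_e n' (pdeg x).
  by move=> i; rewrite /n' /vmeet_e; case: (pdeg x i) => // N; apply: geq_minr.
have Hmn' : vle m n'.
  move=> i; move: (Hm i) (Hmn i); rewrite /n' /vmeet_e.
  by case: (pdeg x i) => [N|] /= H1 H2; [lia | exact H2].
have Em : vmeet_e m (pdeg x) = m.
  apply: vext => i; move: (Hm i); rewrite /vmeet_e.
  by case: (pdeg x i) => // N H; apply/minn_idPl.
have Ed : vmeet_e (deg lam) (pdeg z) = deg lam.
  apply: vext => i; rewrite /z /= /vmeet_e /vadd_e /vsub_e.
  case: (pdeg x i) => [N|] //=; lia.
have Eb : vmeet_e (vadd (vsub n m) (deg lam)) (pdeg z) = vadd (deg lam) (vsub n' m).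
  apply: vext => i; move: (Hm i); rewrite /z /n' /= /vmeet_e /vadd_e /vsub_e /vadd /vsub.
  case: (pdeg x i) => [N|] /= H; lia.
have Erb : r (vadd (deg lam) (vsub n' m)) = n'.
  by apply: vext => i; rewrite /r /vadd /vsub /vjoin; have := Hmn' i; lia.
split.
- split => //.
  + by move=> i; rewrite /vadd; lia.
  + move=> H; apply: Hnx => i; move: (H i) (Hm i).
    rewrite /z /= /vadd_e /vsub_e /vadd /vsub.
    case: (pdeg x i) => [N|] //= H1 H2; lia.
- split => //; split => //; by exists nx.
- rewrite Ed Eb Em Ez /W Erb.
  have [D R S _ _] := Hgx m n' n' Hmn' (vle_refl _) Hn'x.
  have Hc : src lam = rng (pmor x m n') by rewrite R.
  apply: (@seg_char _ _ _ lam (pmor x m n') (idm (src (pmor x m n')))) => //.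
  + by rewrite rng_idm.
  + by rewrite (comp_idr' Hc).
  + by rewrite D; apply: vext => i; rewrite /vsub /vadd; lia.
- by rewrite Ed Em; apply: vext => i; rewrite /vsub; lia.
- by apply: vext => i; rewrite /vsub /vadd; lia.
Qed.
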